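(* Let $T$ be a tree with at least two vertices, rooted at a vertex $r$ of degree one, and let $V_2$ be the set of vertices labeled 2 in the labeling described in the context. Then for every dominating set $D$ of $T$, $D\leftrightarrow_{|D|+1} V_2$.
   Context: Labeling of $T$ (rooted at a degree-one vertex $r$), from the leaves upwards: every leaf other than $r$ gets label 1; every non-root internal vertex $v$, once all its children are labeled, gets label 1 if all children of $v$ have label 3, label 2 if at least one child has label 1, and label 3 otherwise; the root $r$ gets label 3 if its unique child has label 2, and label 2 otherwise. A set $D\subseteq V(T)$ is a dominating set if every vertex is in $D$ or adjacent to a vertex of $D$. Two dominating sets $D,D'$ are adjacent if $|D\triangle D'|=1$. For dominating sets $D_p,D_q$ and an integer $k>0$, write $D_p\leftrightarrow_k D_q$ if there is a sequence $D_0=D_p,\dots,D_\ell=D_q$ ($\ell\ge0$) of dominating sets of $T$ with consecutive sets adjacent and $|D_i|\le k$ for all $i$. *)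

(* Defs.v *)
From mathcomp Require Import all_boot.
Set Implicit Arguments. Unset Strict Implicit. Unset Printing Implicit Defensive.

Section Tree.
Variables (T : finType) (e : rel T).

Definition connected_graph : Prop := forall x y : T, connect e x y.

Definition acyclic_graph : Prop := forall c : seq T, ucycle e c -> size c < 3.

Definition is_tree : Prop :=
  [/\ symmetric e, irreflexive e, connected_graph & acyclic_graph].

Definition degree (v : T) : nat := #|[set u | e v u]|.

(* Tree rooted at r: c is a child of v iff c is adjacent to v and every
   path from c to r passes through v (i.e. c cannot reach r avoiding v). *)
Definition avoid (v : T) : rel T := fun x y => [&& e x y, x != v & y != v].
Definition child (r v c : T) : bool := e v c && ~~ connect (avoid v) c r.
Definition children (r v : T) : seq T := [seq c <- enum T | child r v c].

Fixpoint lab_fuel (r : T) (k : nat) (v : T) : nat :=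
  match k with
  | 0 => 1
  | k'.+1 =>
    let ch := children r v in
    if v == r then
      (if has (fun c => lab_fuel r k' c == 2) ch then 3 else 2)
    else if all (fun c => lab_fuel r k' c == 3) ch then 1
    else if has (fun c => lab_fuel r k' c == 1) ch then 2
    else 3
  end.

(* Heights are < #|T|, so fuel #|T| suffices. *)
Definition label (r v : T) : nat := lab_fuel r #|T| v.

Definition V2 (r : T) : {set T} := [set v | label r v == 2].

Definition dominating (D : {set T}) : Prop :=
  forall v : T, v \in D \/ exists2 u, u \in D & e u v.

Definition adj_sets (A B : {set T}) : bool := #|(A :\: B) :|: (B :\: A)| == 1.

Definition reconf (k : nat) (Dp Dq : {set T}) : Prop :=
  exists s : seq {set T},
    [/\ path adj_sets Dp s, last Dp s = Dq,
        (forall A, A \in Dp :: s -> dominating A) &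
        (forall A, A \in Dp :: s -> #|A| <= k)].

End Tree.

(* Main.v *)
Require Import Defs.
From mathcomp Require Import all_boot zify.
Set Implicit Arguments. Unset Strict Implicit. Unset Printing Implicit Defensive.

Section Paths.
Variables (T : finType) (e : rel T).
Hypothesis esym : symmetric e.
Hypothesis eirr : irreflexive e.

Lemma path_avoid z x p : path e x p -> z \notin x :: p -> path (avoid e z) x p.
Proof.
elim: p x => [//|y p IH] x /= /andP[exy pp].
rewrite !in_cons !negb_or => /andP[zx /andP[zy zp]].
rewrite /avoid exy eq_sym zx eq_sym zy /=.
apply: IH => //; by rewrite in_cons negb_or zy.
Qed.

Lemma connect_avoid z x p : path e x p -> z \notin x :: p ->
  connect (avoid e z) x (last x p).
Proof. by move=> Hp Hz; apply/connectP; exists p => //; apply: path_avoid. Qed.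

Lemma avoid_to x z : x != z -> ~~ connect (avoid e z) x z.
Proof.
move=> Hxz; apply/negP => /connectP [p Hp Hl].
elim: p x Hxz Hp Hl => [|y p IH] x Hxz /=; first by move=> _ Hl; rewrite Hl eqxx in Hxz.
case/andP => /and3P [_ _ Hy] Hp Hl; exact: (IH y Hy Hp Hl).
Qed.

Lemma avoid_switch r v c x : ~~ connect (avoid e v) c r -> x != c ->
  connect (avoid e v) x r -> connect (avoid e c) x r.
Proof.
move=> Hc Hx /connectP [p Hp Hl].
elim: p x Hx Hp Hl => [|y p IH] x Hx /=; first by move=> _ ->; exact: connect0.
case/andP => /and3P [exy xv yv] Hp Hl.
have yc : y != c.
  apply/negP => /eqP Eyc; move: Hc; rewrite -Eyc => /negP; apply.
  by apply/connectP; exists p.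
apply: (connect_trans (connect1 _)) (IH y yc Hp Hl).
by rewrite /avoid exy Hx yc.
Qed.

Lemma child_up r v c : e v c -> ~~ connect (avoid e v) c r ->
  connect e v r -> connect (avoid e c) v r.
Proof.
move=> evc Hc /connectP [p0 Hp0 Hl0].
have vc : v != c by apply/negP => /eqP E; rewrite E eirr in evc.
have : size p0 <= size p0 by [].
move: {2}(size p0) => n.
elim: n p0 Hp0 Hl0 => [|n IH] p Hp Hl.
  rewrite leqn0 => /nilP Ep; rewrite Ep /= in Hl; rewrite Hl; exact: connect0.
move=> Hsz.
case Hcp: (c \in p); last first.
  rewrite Hl; apply: connect_avoid => //; by rewrite in_cons negb_or eq_sym vc Hcp.
case/splitPr: Hcp Hp Hl Hsz => p1 p2.
rewrite cat_path last_cat /= => /andP [_ /andP [_ Hp2]] Hl Hsz.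
case Hvp: (v \in p2); last first.
  case/negP: Hc; rewrite Hl; apply: connect_avoid => //.
  by rewrite in_cons negb_or vc Hvp.
case/splitPr: Hvp Hp2 Hl Hsz => q1 q2.
rewrite cat_path last_cat /= => /andP [_ /andP [_ Hq2]] Hl Hsz.
apply: (IH q2 Hq2 Hl).
move: Hsz; rewrite size_cat /= size_cat /=; lia.
Qed.
End Paths.

Section Tree.
Variables (T : finType) (e : rel T) (r : T).
Hypothesis esym : symmetric e.
Hypothesis eirr : irreflexive e.
Hypothesis econn : connected_graph e.
Hypothesis eacyc : acyclic_graph e.

Definition del (a b : T) : rel T := fun x y =>
  e x y && ~~ (((x == a) && (y == b)) || ((x == b) && (y == a))).

Lemma del_sym a b : symmetric (del a b).
Proof.
move=> x y; rewrite /del esym; congr (_ && ~~ _).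
by rewrite orbC; congr (_ || _); rewrite andbC.
Qed.

Lemma no_alt a b : e a b -> ~~ connect (del a b) a b.
Proof.
move=> eab; apply/negP => /connectP [p Hp Hl].
move: Hl; case: (shortenP Hp) => p' Hp' Hu _ Hl.
case: p' Hp' Hu Hl => [|y [|z q]] /= Hp' Hu Hl.
- by rewrite Hl eirr in eab.
- by move: Hp'; rewrite -Hl /= /del !eqxx /= andbF.
- have Hc : ucycle e [:: a, y, z & q].
    apply/andP; split; last exact: Hu.
    rewrite /cycle rcons_path; apply/andP; split.
      apply: (@sub_path _ (del a b)); last exact: Hp'.
      by move=> u w /andP[].
    by rewrite /= -Hl esym.
  by have := eacyc Hc.
Qed.

Lemma sub_del a b z : (z == a) || (z == b) ->
  subrel (avoid e z) (connect (del a b)).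
Proof.
move=> Hz x y /and3P [exy xz yz]; apply: connect1.
rewrite /del exy /=.
by case/orP: Hz => /eqP <-; rewrite (negbTE xz) (negbTE yz) ?andbF.
Qed.

Lemma parent_ex v : v != r -> exists p, child e r p v.
Proof.
move=> vr; have /connectP [q Hq Hl] := econn v r.
move: Hl; case: (shortenP Hq) => q' Hq' Hu _ Hl.
case: q' Hq' Hu Hl => [|u q1] /=; first by move=> _ _ E; rewrite E eqxx in vr.
case/andP => evu Hq1 Hu Hl.
exists u; rewrite /child esym evu /=.
apply/negP => Hvr.
have Hur : connect (avoid e v) u r.
  rewrite Hl; apply: connect_avoid => //.
  by move: Hu; rewrite /= => /andP[].
have evu' : e u v by rewrite esym.
case/negP: (no_alt evu').
apply: (connect_trans (connect_sub (sub_del (z:=v) _) Hur)); first by rewrite eqxx orbT.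
rewrite (sym_connect_sym (@del_sym u v)).
apply: (connect_sub (sub_del (z:=u) _) Hvr); by rewrite eqxx.
Qed.

Lemma child_e v c : child e r v c -> e v c.
Proof. by case/andP. Qed.

Lemma child_neq_r v c : child e r v c -> c != r.
Proof. case/andP => _; apply: contra => /eqP ->; exact: connect0. Qed.

Lemma child_parent_up v c : child e r v c -> connect (avoid e c) v r.
Proof. by case/andP => H1 H2; apply: child_up. Qed.

Lemma neighbor_child v w y : child e r v w -> e w y -> y != v -> child e r w y.
Proof.
move=> Hw ewy yv; rewrite /child ewy /=; apply/negP => Hyr.
have Hvr := child_parent_up Hw.
case/negP: (no_alt ewy).
have ewv : e w v by rewrite esym; apply: child_e Hw.
have wy : w != y by apply/negP => /eqP E; rewrite E eirr in ewy.
apply: (connect_trans (connect1 (_ : del w y w v))).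
  by rewrite /del ewv eqxx (negbTE wy) /= ?orbF eq_sym yv.
apply: (connect_trans (connect_sub (sub_del (z:=w) _) Hvr)); first by rewrite eqxx.
rewrite (sym_connect_sym (@del_sym w y)).
apply: (connect_sub (sub_del (z:=w) _) Hyr); by rewrite eqxx.
Qed.

Definition sub (v : T) : {set T} := [set x | (x == v) || ~~ connect (avoid e v) x r].

Lemma sub_lt v c : child e r v c -> #|sub c| < #|sub v|.
Proof.
move=> Hc; apply: proper_card; apply/properP; split.
  apply/subsetP => x; rewrite !inE.
  case/orP => [/eqP ->|Hx]; first by case/andP: Hc => _ ->; rewrite orbT.
  case: eqP => //= /eqP xv.
  case: (eqVneq x c) => [->|xc]; first by case/andP: Hc.
  apply/negP => H; case/negP: Hx; apply: avoid_switch H => //.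
  by case/andP: Hc.
exists v; first by rewrite inE eqxx.
rewrite inE negb_or (child_parent_up Hc) andbT.
by apply/negP => /eqP E; move: (child_e Hc); rewrite E eirr.
Qed.

Lemma sub_gt0 v : 0 < #|sub v|.
Proof. by apply/card_gt0P; exists v; rewrite inE eqxx. Qed.

End Tree.

Section Lab.
Variables (T : finType) (e : rel T) (r : T).
Hypothesis esym : symmetric e.
Hypothesis eirr : irreflexive e.
Hypothesis econn : connected_graph e.
Hypothesis eacyc : acyclic_graph e.
Hypothesis Hdeg : degree e r = 1.

Local Notation sub := (sub e r).
Local Notation lab := (label e r).

Lemma mem_children v c : (c \in children e r v) = child e r v c.
Proof. by rewrite mem_filter mem_enum andbT. Qed.

Lemma lab_fuelS k v : lab_fuel e r k.+1 v =
  if v == r then (if has (fun c => lab_fuel e r k c == 2) (children e r v) then 3 else 2)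
  else if all (fun c => lab_fuel e r k c == 3) (children e r v) then 1
  else if has (fun c => lab_fuel e r k c == 1) (children e r v) then 2
  else 3.
Proof. by []. Qed.

Lemma stab n : forall v k1 k2, #|sub v| <= n -> #|sub v| <= k1 -> #|sub v| <= k2 ->
  lab_fuel e r k1 v = lab_fuel e r k2 v.
Proof.
elim: n => [|n IH] v k1 k2 H0 H1 H2.
  by move: (sub_gt0 e r v); rewrite leqn0 in H0; rewrite (eqP H0).
case: k1 H1 => [|k1] H1; first by move: (sub_gt0 e r v); rewrite leqn0 in H1; rewrite (eqP H1).
case: k2 H2 => [|k2] H2; first by move: (sub_gt0 e r v); rewrite leqn0 in H2; rewrite (eqP H2).
have E : {in children e r v, lab_fuel e r k1 =1 lab_fuel e r k2}.
  move=> c; rewrite mem_children => Hc.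
  have := sub_lt eirr econn Hc.
  move=> Hlt; apply: IH; lia.
rewrite !lab_fuelS.
rewrite (@eq_in_has _ (fun c => lab_fuel e r k1 c == 2) (fun c => lab_fuel e r k2 c == 2)); last by move=> c Hc /=; rewrite (E c Hc).
rewrite (@eq_in_has _ (fun c => lab_fuel e r k1 c == 1) (fun c => lab_fuel e r k2 c == 1)); last by move=> c Hc /=; rewrite (E c Hc).
rewrite (@eq_in_all _ (fun c => lab_fuel e r k1 c == 3) (fun c => lab_fuel e r k2 c == 3)) //; by move=> c Hc /=; rewrite (E c Hc).
Qed.

Lemma lab_eq v : lab v =
  if v == r then (if has (fun c => lab c == 2) (children e r v) then 3 else 2)
  else if all (fun c => lab c == 3) (children e r v) then 1
  else if has (fun c => lab c == 1) (children e r v) then 2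
  else 3.
Proof.
have Hv : #|sub v| <= #|T| by apply: max_card.
have HT : #|T| = (#|T|.-1).+1 by move: (sub_gt0 e r v); lia.
have E : {in children e r v, lab_fuel e r #|T|.-1 =1 lab}.
  move=> c; rewrite mem_children => Hc.
  have := sub_lt eirr econn Hc.
  move=> Hlt; rewrite /label; apply: (stab (n := #|T|)); lia.
rewrite {1}/label {1}HT lab_fuelS.
rewrite (@eq_in_has _ (fun c => lab_fuel e r #|T|.-1 c == 2) (fun c => lab c == 2)); last by move=> c Hc /=; rewrite (E c Hc).
rewrite (@eq_in_has _ (fun c => lab_fuel e r #|T|.-1 c == 1) (fun c => lab c == 1)); last by move=> c Hc /=; rewrite (E c Hc).
rewrite (@eq_in_all _ (fun c => lab_fuel e r #|T|.-1 c == 3) (fun c => lab c == 3)) //; by move=> c Hc /=; rewrite (E c Hc).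
Qed.


Lemma lab_range v : [|| lab v == 1, lab v == 2 | lab v == 3].
Proof. by rewrite lab_eq; repeat case: ifP. Qed.

Lemma lab_r_ne1 : lab r != 1.
Proof. by rewrite lab_eq eqxx; case: ifP. Qed.

Lemma lab1_ch v c : v != r -> lab v = 1 -> child e r v c -> lab c = 3.
Proof.
move=> Hv; rewrite lab_eq (negbTE Hv).
case: ifP => [/allP H _ Hc|_]; first by apply/eqP; apply: H; rewrite mem_children.
by case: ifP.
Qed.

Lemma lab2_ch v : v != r -> lab v = 2 -> exists2 c, child e r v c & lab c = 1.
Proof.
move=> Hv; rewrite lab_eq (negbTE Hv).
case: ifP => // _; case: ifP => // /hasP [c Hc /eqP H] _.
by exists c; rewrite -?mem_children.
Qed.

Lemma lab3_ch v : v != r -> lab v = 3 ->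
  (exists2 c, child e r v c & lab c = 2) /\ (forall c, child e r v c -> lab c != 1).
Proof.
move=> Hv; rewrite lab_eq (negbTE Hv).
case: ifP => // /allPn [c Hc Hc3]; case: ifP => // /hasPn Hn _; split.
  exists c; first by rewrite -mem_children.
  have := lab_range c; have := Hn c Hc; move: Hc3.
  by case: (lab c) => [|[|[|[|?]]]].
by move=> c' Hc'; apply: Hn; rewrite mem_children.
Qed.

Lemma lab_par2 v c : v != r -> child e r v c -> lab c = 1 -> lab v = 2.
Proof.
move=> Hv Hc Hl; rewrite lab_eq (negbTE Hv).
case: ifP => [/allP H|_].
  by have := H c; rewrite mem_children Hl => /(_ Hc).
by rewrite ifT //; apply/hasP; exists c; rewrite ?mem_children ?Hl.
Qed.

Lemma labr2 c : lab r = 2 -> child e r r c -> lab c != 2.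
Proof.
rewrite lab_eq eqxx; case: ifP => // /hasPn H _ Hc.
by apply: H; rewrite mem_children.
Qed.

Lemma labr3 : lab r = 3 -> exists2 c, child e r r c & lab c = 2.
Proof.
rewrite lab_eq eqxx; case: ifP => // /hasP [c Hc /eqP H] _.
by exists c; rewrite -?mem_children.
Qed.

Lemma root_child c : e r c -> child e r r c.
Proof.
move=> Hc; rewrite /child Hc /=; apply: avoid_to.
by apply/negP => /eqP E; rewrite E eirr in Hc.
Qed.

Lemma root_uniq c c' : e r c -> e r c' -> c = c'.
Proof.
have /cards1P [x Hx] : #|[set u | e r u]| == 1 by rewrite -/(degree e r) Hdeg.
move=> H1 H2.
have : c \in [set u | e r u] by rewrite inE.
have : c' \in [set u | e r u] by rewrite inE.
by rewrite Hx !inE => /eqP -> /eqP ->.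
Qed.

Lemma root_nb : exists c, e r c.
Proof.
have /cards1P [x Hx] : #|[set u | e r u]| == 1 by rewrite -/(degree e r) Hdeg.
exists x; have : x \in [set u | e r u] by rewrite Hx inE.
by rewrite inE.
Qed.

Lemma V2_dom : dominating e (V2 e r).
Proof.
move=> y; rewrite /V2 inE.
case/or3P: (lab_range y) => /eqP Hy; last 2 first.
- by left; rewrite Hy.
- case: (eqVneq y r) => [Eyr|yr].
    have Hr : lab r = 3 by move: Hy; rewrite Eyr.
    have [c Hc Hl] := labr3 Hr.
    by right; exists c; rewrite ?inE ?Hl // esym Eyr; apply: child_e Hc.
  have [[c Hc Hl] _] := lab3_ch yr Hy.
  by right; exists c; rewrite ?inE ?Hl // esym; apply: child_e Hc.
right.
have yr : y != r by apply/negP => /eqP E; move: Hy; rewrite E => Hy'; move: lab_r_ne1; rewrite Hy'.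
have [p Hp] := parent_ex esym eirr econn eacyc yr.
exists p; last by apply: child_e Hp.
rewrite inE; case: (eqVneq p r) => [Epr|pr]; last by rewrite (lab_par2 pr Hp Hy).
case/or3P: (lab_range p) => /eqP Hl //; first by move: Hl; rewrite Epr => Hl'; move: lab_r_ne1; rewrite Hl'.
have Hr : lab r = 3 by move: Hl; rewrite Epr.
have [c Hc Hc2] := labr3 Hr.
move: Hp; rewrite Epr => Hp.
have := root_uniq (child_e Hc) (child_e Hp) => Ecy.
by move: Hc2; rewrite Ecy Hy.
Qed.

Lemma dom_swap (D D' : {set T}) u : dominating e D ->
  (forall y, y \in D -> y != u -> y \in D') ->
  (u \in D' \/ exists2 z, z \in D' & e z u) ->
  (forall y, e u y -> y \notin D -> y \in D' \/ exists2 z, z \in D' & e z y) ->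
  dominating e D'.
Proof.
move=> HD Hsub Hu Hy y.
case: (boolP (y \in D)) => [yD|yD].
  case: (eqVneq y u) => [->|yu]; first exact: Hu.
  by left; apply: Hsub.
case: (HD y) => [yD'|[z zD ezy]]; first by rewrite yD' in yD.
case: (eqVneq z u) => [Ezu|zu]; first by apply: Hy => //; rewrite -Ezu.
by right; exists z => //; apply: Hsub.
Qed.

Lemma S1 (D : {set T}) v u y : (forall x, #|sub x| < #|sub v| -> lab x = 2 -> x \in D) ->
  lab u != 2 -> y != r -> lab y = 3 -> #|sub y| < #|sub v| ->
  exists2 x, x \in (v |: D) :\ u & e x y.
Proof.
move=> Hmin Hu yr Hy Hyv.
have [[c Hc Hc2] _] := lab3_ch yr Hy.
exists c; last by rewrite esym; apply: child_e Hc.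
have Hcv : #|sub c| < #|sub v| by apply: leq_trans (sub_lt eirr econn Hc) _; apply: ltnW.
rewrite !inE (Hmin c Hcv Hc2) orbT andbT.
by apply/negP => /eqP E; move: Hu; rewrite -E Hc2.
Qed.

Lemma S2 (D : {set T}) v u z y : (forall x, #|sub x| < #|sub v| -> lab x = 2 -> x \in D) ->
  lab u != 2 -> z != r -> lab z = 3 -> child e r z y -> y \notin D ->
  #|sub z| < #|sub v| ->
  exists2 x, x \in (v |: D) :\ u & e x y.
Proof.
move=> Hmin Hu zr Hz Hy yD Hzv.
have Hyv : #|sub y| < #|sub v| by apply: leq_trans (sub_lt eirr econn Hy) _; apply: ltnW.
have [_ Hn1] := lab3_ch zr Hz.
case/or3P: (lab_range y) => /eqP Hl.
- by move: (Hn1 y Hy); rewrite Hl.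
- by move: yD; rewrite (Hmin y Hyv Hl).
- exact: (S1 Hmin Hu (child_neq_r Hy) Hl Hyv).
Qed.

Lemma swap (D : {set T}) : dominating e D -> ~~ (V2 e r \subset D) ->
  exists v u, [/\ v \in V2 e r, v \notin D, u \in D, u \notin V2 e r &
                  dominating e ((v |: D) :\ u)].
Proof.
move=> HD /subsetPn [v0 Hv0 Hv0D].
have Hv0A : v0 \in V2 e r :\: D by rewrite inE Hv0D.
case: (arg_minnP (fun x => #|sub x|) Hv0A) => v HvA Hmin0.
have HvA' : v \in V2 e r :\: D := HvA.
move: HvA'; rewrite inE => /andP [vD Hv2]; move: (Hv2); rewrite /V2 inE => /eqP Hv.
have Hmin : forall x, #|sub x| < #|sub v| -> lab x = 2 -> x \in D.
  move=> x Hx Hl; apply/negPn/negP => xD.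
  have : x \in V2 e r :\: D by rewrite !inE xD Hl.
  by move/Hmin0; rewrite leqNgt Hx.
have Hinv : forall u, u \in D -> v \in (v |: D) :\ u.
  move=> u uD; rewrite !inE eqxx andbT.
  by apply/negP => /eqP E; rewrite E uD in vD.
have Hsub : forall u y, y \in D -> y != u -> y \in (v |: D) :\ u.
  by move=> u y yD yu; rewrite !inE yD yu orbT.
have [w Hw Hcase] : exists2 w, child e r v w & (lab w = 1 \/ (v = r /\ lab w = 3)).
  case: (eqVneq v r) => [Evr|vr].
    have [c Hc] := root_nb; have Hrc := root_child Hc.
    have Hr2 : lab r = 2 by move: Hv; rewrite Evr.
    exists c; first by rewrite Evr.
    have := labr2 Hr2 Hrc.
    by case/or3P: (lab_range c) => /eqP ->; [left|by []|right].
  by have [c Hc Hl] := lab2_ch vr Hv; exists c => //; left.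
have wr := child_neq_r Hw.
have Hwv := sub_lt eirr econn Hw.
case: Hcase => [Hw1|[Evr Hw3]].
  case: (boolP (w \in D)) => [wD|wD].
    have Hu2 : lab w != 2 by rewrite Hw1.
    exists v, w; split => //; first by rewrite /V2 inE Hw1.
    apply: dom_swap HD (Hsub w) _ _.
      by right; exists v; [apply: Hinv | apply: child_e Hw].
    move=> y ewy yD; case: (eqVneq y v) => [->|yv]; first by left; apply: Hinv.
    have Hy := neighbor_child esym eirr econn eacyc Hw ewy yv.
    right; apply: (S1 Hmin Hu2 (child_neq_r Hy) (lab1_ch wr Hw1 Hy)).
    by apply: ltn_trans (sub_lt eirr econn Hy) Hwv.
  case: (HD w) => [wD'|[z zD ezw]]; first by rewrite wD' in wD.
  have zv : z != v by apply/negP => /eqP E; move: zD; rewrite E (negbTE vD).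
  have Hz := neighbor_child esym eirr econn eacyc Hw (_ : e w z) zv.
  have Hz' : child e r w z by apply: Hz; rewrite esym.
  have Hz3 := lab1_ch wr Hw1 Hz'.
  have zr := child_neq_r Hz'.
  have Hzv : #|sub z| < #|sub v| by apply: ltn_trans (sub_lt eirr econn Hz') Hwv.
  have Hu2 : lab z != 2 by rewrite Hz3.
  exists v, z; split => //; first by rewrite /V2 inE Hz3.
  apply: dom_swap HD (Hsub z) _ _.
    by right; apply: (S1 Hmin Hu2 zr Hz3 Hzv).
  move=> y ezy yD; case: (eqVneq y w) => [->|yw].
    by right; exists v; [apply: Hinv | apply: child_e Hw].
  have Hy := neighbor_child esym eirr econn eacyc Hz' ezy yw.
  by right; apply: (S2 Hmin Hu2 zr Hz3 Hy yD Hzv).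
have wD : w \in D.
  case: (HD r) => [rD|[z zD ezr]]; first by move: vD; rewrite Evr rD.
  have Erz : e r z by rewrite esym.
  have Erw : e r w by move: (child_e Hw); rewrite Evr.
  by rewrite -(root_uniq Erz Erw).
have Hu2 : lab w != 2 by rewrite Hw3.
exists v, w; split => //; first by rewrite /V2 inE Hw3.
apply: dom_swap HD (Hsub w) _ _.
  by right; exists v; [apply: Hinv | apply: child_e Hw].
move=> y ewy yD; case: (eqVneq y v) => [->|yv]; first by left; apply: Hinv.
have Hy := neighbor_child esym eirr econn eacyc Hw ewy yv.
by right; apply: (S2 Hmin Hu2 wr Hw3 Hy yD Hwv).
Qed.

End Lab.

Section Reconf.
Variables (T : finType) (e : rel T).

Lemma adj_sym (A B : {set T}) : adj_sets A B = adj_sets B A.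
Proof. by rewrite /adj_sets setUC. Qed.

Lemma adj_rem (A : {set T}) x : x \in A -> adj_sets A (A :\ x).
Proof.
move=> Hx; rewrite /adj_sets.
have -> : A :\: (A :\ x) = [set x].
  apply/setP => y; rewrite !inE; case: (eqVneq y x) => [->|yx]; first by rewrite ?eqxx Hx.
  by case: (y \in A).
have -> : (A :\ x) :\: A = set0.
  by apply/setP => y; rewrite !inE; case: (y \in A); rewrite ?andbF.
by rewrite setU0 cards1.
Qed.

Lemma adj_add (A : {set T}) x : x \notin A -> adj_sets A (x |: A).
Proof.
move=> Hx; rewrite adj_sym.
have {2}-> : A = (x |: A) :\ x by rewrite setU1K.
by apply: adj_rem; rewrite setU11.
Qed.

Lemma reconf_nil k (A : {set T}) : dominating e A -> #|A| <= k -> reconf e k A A.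
Proof.
move=> HA Hk; exists [::]; split => //= B; rewrite inE => /eqP -> //.
Qed.

Lemma reconf_cons k (A B C : {set T}) : adj_sets A B -> dominating e A -> #|A| <= k ->
  reconf e k B C -> reconf e k A C.
Proof.
move=> Hab HA Hk [s [Hp Hl Hd Hc]]; exists (B :: s); split => /=.
- by rewrite Hab Hp.
- done.
- by move=> X; rewrite in_cons => /orP [/eqP ->|/Hd].
- by move=> X; rewrite in_cons => /orP [/eqP ->|/Hc].
Qed.

Lemma dom_sub (A B : {set T}) : dominating e A -> A \subset B -> dominating e B.
Proof.
move=> HA /subsetP sAB v; case: (HA v) => [/sAB|[u /sAB Hu Huv]]; first by left.
by right; exists u.
Qed.

Lemma phase2 k (V : {set T}) : dominating e V ->
  forall n (D : {set T}), #|D :\: V| <= n -> V \subset D -> #|D| <= k -> reconf e k D V.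
Proof.
move=> HV; elim=> [|n IH] D Hn HVD Hk.
  have E : D = V.
    apply/eqP; rewrite eqEsubset HVD andbT.
    by rewrite -setD_eq0 -cards_eq0 -leqn0.
  by move: Hk; rewrite E => Hk; apply: reconf_nil.
case: (set_0Vmem (D :\: V)) => [E|[x Hx]].
  have E' : D = V by apply/eqP; rewrite eqEsubset HVD andbT -setD_eq0 E.
  by move: Hk; rewrite E' => Hk; apply: reconf_nil.
move: (Hx); rewrite inE => /andP [xV xD].
apply: (reconf_cons (adj_rem xD)) => //; first exact: dom_sub HV HVD.
apply: IH.
- have : #|D :\: V| = (x \in D :\: V) + #|(D :\: V) :\ x| by apply: cardsD1.
  rewrite Hx => H.
  have -> : (D :\ x) :\: V = (D :\: V) :\ x by apply/setP => y; rewrite !inE; case: (y \in V); rewrite ?andbF ?andbT.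
  lia.
- apply/subsetP => y yV; rewrite !inE (subsetP HVD y yV) andbT.
  by apply/negP => /eqP E; move: yV; rewrite E (negbTE xV).
- by apply: leq_trans Hk; rewrite (cardsD1 x D) xD.
Qed.

End Reconf.

Lemma phase1 (T : finType) (e : rel T) (r : T) : symmetric e -> irreflexive e ->
  connected_graph e -> acyclic_graph e -> degree e r = 1 ->
  forall k n (D : {set T}), #|V2 e r :\: D| <= n -> dominating e D -> #|D|.+1 <= k ->
  reconf e k D (V2 e r).
Proof.
move=> esym eirr econn eacyc Hdeg k.
have HV := V2_dom esym eirr econn eacyc Hdeg.
elim=> [|n IH] D Hn HD Hk.
  apply: (phase2 HV (n := #|D :\: V2 e r|)) => //; last by apply: ltnW.
  by rewrite -setD_eq0 -cards_eq0 -leqn0.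
case: (boolP (V2 e r \subset D)) => [HVD|HVD].
  by apply: (phase2 HV (n := #|D :\: V2 e r|)) => //; apply: ltnW.
have [v [u [Hv vD uD uV HD']]] := swap esym eirr econn eacyc Hdeg HD HVD.
have uv : u != v by apply/negP => /eqP E; move: uD; rewrite E (negbTE vD).
have Hc1 : #|v |: D| = #|D|.+1 by rewrite cardsU1 vD.
have uD1 : u \in v |: D by rewrite inE uD orbT.
have Hc2 : #|v |: D| = #|(v |: D) :\ u|.+1 by rewrite (cardsD1 u (v |: D)) uD1.
apply: (reconf_cons (adj_add vD)) => //; first by apply: ltnW.
apply: (reconf_cons (adj_rem uD1)).
- by apply: (dom_sub HD); apply/subsetP => y yD; rewrite inE yD orbT.
- by rewrite Hc1.
apply: IH => //; last by rewrite -Hc2 Hc1.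
have Hlt : #|V2 e r :\: ((v |: D) :\ u)| < #|V2 e r :\: D|.
  apply: proper_card; apply/properP; split.
    apply/subsetP => y; rewrite !inE => /andP [Hy Hy2]; rewrite Hy2 andbT.
    move: Hy; rewrite negb_and negbK negb_or => /orP [/eqP Eyu|/andP [_ ->] //].
    by move: uV; rewrite -Eyu /V2 inE Hy2.
  exists v; first by rewrite inE vD.
  by rewrite !inE eqxx /= eq_sym uv.
lia.
Qed.

Theorem lemma10 (T : finType) (e : rel T) (r : T) (D : {set T}) :
  is_tree e -> 1 < #|T| -> degree e r = 1 ->
  dominating e D -> reconf e #|D|.+1 D (V2 e r).
Proof.
case=> esym eirr econn eacyc _ Hdeg HD.
exact: (phase1 esym eirr econn eacyc Hdeg (n := #|V2 e r :\: D|)).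
Qed.
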